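(* Let $\gamma$ be the Euler–Mascheroni constant and $\lambda(s)=\sum_{n\ge0}(2n+1)^{-s}$ (for real $s>1$). Then $$-\lim_{x\to\infty}\left\{\Gamma(\lambda(x)-1)-3^x+\Bigl(\frac95\Bigr)^x+\Bigl(\frac97\Bigr)^x-\Bigl(\frac{27}{25}\Bigr)^x+1\right\}=\gamma .$$
   Context: $\Gamma$ is Euler's Gamma function. *)

(* Defs.v *)
From Stdlib Require Import Reals.
From Coquelicot Require Import Coquelicot.
Open Scope R_scope.

Definition Gamma (z : R) : R :=
  RInt_gen (fun t => Rpower t (z - 1) * exp (- t))
           (at_right 0) (Rbar_locally p_infty).

Definition euler_gamma : R :=
  real (Lim_seq (fun n => sum_n_m (fun k => / INR k) 1 n - ln (INR n))).

Definition dirichlet_lambda (s : R) : R :=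
  Series (fun n => / Rpower (2 * INR n + 1) s).

(* Main.v *)
Require Import Defs.
From Stdlib Require Import Reals Lra Lia Psatz.
From Coquelicot Require Import Coquelicot.
Open Scope R_scope.

Lemma exp_pow_n (x : R) (n : nat) : exp x ^ n = exp (INR n * x).
Proof.
induction n as [|n IH]. simpl. rewrite Rmult_0_l, exp_0. reflexivity.
rewrite S_INR. simpl. rewrite IH. rewrite <- exp_plus. f_equal. ring.
Qed.

Lemma bernoulli_neg (x : R) (n : nat) : -1 <= x -> 1 + INR n * x <= (1 + x) ^ n.
Proof.
intros Hx. induction n as [|n IH]. simpl. lra.
rewrite S_INR. simpl.
assert (0 <= 1 + x) by lra.
apply Rle_trans with ((1+x)*(1 + INR n * x)).
- assert (0 <= INR n * x * x).
  { rewrite Rmult_assoc. apply Rmult_le_pos. apply pos_INR. nra. }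
  nra.
- apply Rmult_le_compat_l; auto.
Qed.

Lemma exp_minus_pow (t n : R) (k : nat) : INR k = n -> 1 <= n -> 0 <= t <= n ->
  0 <= exp (-t) - (1 - t/n)^k <= t^2 * exp (-t) / n.
Proof.
intros Hk Hn Ht.
assert (H0 : 0 <= 1 - t/n).
{ assert (t/n <= 1). apply Rmult_le_reg_r with n. lra. unfold Rdiv. rewrite Rmult_assoc, Rinv_l; lra. lra. }
assert (H1 : 1 - t/n <= exp (-(t/n))) by (generalize (exp_ineq1_le (-(t/n))); lra).
assert (He : exp (-(t/n)) ^ k = exp (-t)).
{ rewrite exp_pow_n. f_equal. rewrite Hk. field. lra. }
assert (He2 : exp (t/n) ^ k = exp t).
{ rewrite exp_pow_n. f_equal. rewrite Hk. field. lra. }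
split.
- rewrite <- He. assert ((1 - t/n)^k <= exp (-(t/n))^k). apply pow_incr. lra. lra.
- assert (Hp : (1 + t/n)^k <= exp t).
  { rewrite <- He2. apply pow_incr. split. assert (0 <= t/n). apply Rdiv_le_0_compat; lra. lra.
    generalize (exp_ineq1_le (t/n)); lra. }
  assert (Hb : 1 - t^2/n <= (1 - t/n)^k * (1+t/n)^k).
  { rewrite <- Rpow_mult_distr.
    replace ((1 - t/n)*(1+t/n)) with (1 + (- (t/n)^2)) by ring.
    apply Rle_trans with (1 + INR k * (-(t/n)^2)).
    rewrite Hk. right. field. lra.
    apply bernoulli_neg. assert ((t/n)^2 <= 1). assert (t/n <= 1).
    apply Rmult_le_reg_r with n. lra. unfold Rdiv. rewrite Rmult_assoc, Rinv_l; lra.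
    assert (0 <= t/n) by (apply Rdiv_le_0_compat; lra). nra. lra. }
  assert (Hq : 0 <= (1 - t/n)^k) by (apply pow_le; lra).
  assert (Hm : (1 - t/n)^k * (1+t/n)^k <= (1 - t/n)^k * exp t) by (apply Rmult_le_compat_l; lra).
  assert (Hemt : exp (-t) * exp t = 1). rewrite <- exp_plus. replace (-t+t) with 0 by ring. apply exp_0.
  assert (Hpos : 0 < exp (-t)) by apply exp_pos.
  assert (E : t^2 * exp (-t) / n = exp (-t) * (t^2/n)) by (field; lra).
  rewrite E.
  assert (exp (-t) - (1 - t/n)^k = exp (-t) * (1 - (1-t/n)^k * exp t)).
  { rewrite Rmult_minus_distr_l, Rmult_1_r. rewrite (Rmult_comm ((1 - t/n)^k)), <- Rmult_assoc, Hemt. ring. }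
  rewrite H. apply Rmult_le_compat_l; lra.
Qed.

Lemma is_RInt_pow_k (N : R) (k : nat) : 0 < N ->
  is_RInt (fun t => (1 - t/N)^k) 0 N (N / INR (S k)).
Proof.
intros HN.
assert (HS : 0 < INR (S k)) by (apply lt_0_INR; lia).
set (F := fun t => - (N / INR (S k)) * (1 - t/N)^(S k)).
assert (H := is_RInt_derive F (fun t => (1 - t/N)^k) 0 N).
replace (N / INR (S k)) with (minus (F N) (F 0)).
apply H.
- intros x _. unfold F. auto_derive. auto.
  change (match k with 0%nat => 1 | S _ => INR k + 1 end) with (INR (S k)).
  replace (1 + - (x * / N)) with (1 - x/N) by (field; lra). field. split; lra.
- intros x _. apply (ex_derive_continuous (fun t => (1 - t/N)^k)). auto_derive. auto.
- unfold F, minus, plus, opp; simpl.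
  change (match k with 0%nat => 1 | S _ => INR k + 1 end) with (INR (S k)).
  replace (1 - N/N) with 0 by (field; lra).
  replace (1 - 0/N) with 1 by (field; lra). rewrite pow1. field. lra.
Qed.

Lemma is_RInt_sum_pow (N : R) (m : nat) : 0 < N ->
  is_RInt (fun t => sum_f_R0 (fun k => (1 - t/N)^k) m) 0 N
     (N * sum_f_R0 (fun k => / INR (S k)) m).
Proof.
intros HN. induction m as [|m IH].
- eapply is_RInt_ext. 2: apply (is_RInt_pow_k N 0 HN).
  intros x _. reflexivity.
- eapply is_RInt_ext.
  2: { replace (N * sum_f_R0 (fun k => / INR (S k)) (S m))
         with (plus (N * sum_f_R0 (fun k => / INR (S k)) m) (N / INR (S (S m)))).
       apply (is_RInt_plus (V:=R_NormedModule)). apply IH. apply is_RInt_pow_k; auto.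
       unfold plus; simpl. unfold Rdiv. ring. }
  intros x _. reflexivity.
Qed.

Lemma ln_le' x y : 0 < x -> x <= y -> ln x <= ln y.
Proof. intros Hx [H|H]. left. apply ln_increasing; auto. subst. lra. Qed.

Lemma ln_le_xm1 t : 0 < t -> ln t <= t - 1.
Proof.
intros Ht. rewrite <- (ln_exp (t-1)). apply ln_le'. auto.
generalize (exp_ineq1_le (t-1)). lra.
Qed.

Lemma ln_nonpos t : 0 < t -> t <= 1 -> ln t <= 0.
Proof. intros. rewrite <- ln_1. apply ln_le'; lra. Qed.

Lemma ln_nonneg t : 1 <= t -> 0 <= ln t.
Proof. intros. rewrite <- ln_1. apply ln_le'; lra. Qed.

Lemma exp_m1_le z : 0 <= z -> exp z - 1 <= z * exp z.
Proof.
intros Hz. generalize (exp_ineq1_le (-z)). intros H.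
assert (exp (-z) * exp z = 1). rewrite <- exp_plus. replace (-z+z) with 0 by ring. apply exp_0.
assert (0 < exp z) by apply exp_pos. nra.
Qed.

Lemma exp_le_1 z : z <= 0 -> exp z <= 1.
Proof. intros [H|H]. left. rewrite <- exp_0. apply exp_increasing; auto. subst. rewrite exp_0. lra. Qed.

Lemma exp_ge_1 z : 0 <= z -> 1 <= exp z.
Proof. intros. generalize (exp_ineq1_le z). lra. Qed.

Definition fG (e t : R) := Rpower t (e - 1) * exp (- t).
Definition pw (e t : R) := Rpower t (e - 1).
Definition qq (m : nat) (t : R) := / INR (S m) * sum_f_R0 (fun k => (1 - t / INR (S m))^k) m.

Lemma INRS_pos m : 0 < INR (S m).
Proof. apply lt_0_INR; lia. Qed.
Lemma INRS_ge1 m : 1 <= INR (S m).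
Proof. rewrite S_INR. generalize (pos_INR m). lra. Qed.

Lemma qq_id m t : t * qq m t = 1 - (1 - t/INR (S m))^(S m).
Proof.
unfold qq. generalize (GP_finite (1 - t/INR (S m)) m). rewrite Nat.add_1_r. intros H.
rewrite <- Rmult_assoc. assert (HN := INRS_pos m).
replace (t * / INR (S m)) with (-(1 - t / INR (S m) - 1)) by (field; lra).
rewrite Ropp_mult_distr_l_reverse, Rmult_comm, H. ring.
Qed.

Lemma sum_pow_bounds (x : R) (m : nat) : 0 <= x <= 1 ->
  0 <= sum_f_R0 (fun k => x^k) m <= INR (S m).
Proof.
intros Hx. induction m as [|m IH].
- simpl. lra.
- rewrite tech5. rewrite (S_INR (S m)).
  assert (0 <= x^(S m) <= 1). { split. apply pow_le; lra. rewrite <- (pow1 (S m)). apply pow_incr; lra. } lra.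
Qed.

Lemma qq_bounds m t : 0 <= t <= INR (S m) -> 0 <= qq m t <= 1.
Proof.
intros Ht. assert (HN := INRS_pos m). unfold qq.
assert (0 <= 1 - t / INR (S m) <= 1).
{ split. assert (t / INR (S m) <= 1). apply Rmult_le_reg_r with (INR (S m)). lra.
  unfold Rdiv. rewrite Rmult_assoc, Rinv_l; lra. lra.
  assert (0 <= t / INR (S m)) by (apply Rdiv_le_0_compat; lra). lra. }
destruct (sum_pow_bounds _ m H) as [H1 H2].
assert (0 < / INR (S m)) by (apply Rinv_0_lt_compat; lra).
split. apply Rmult_le_pos; lra.
apply Rmult_le_reg_l with (INR (S m)). lra. rewrite <- Rmult_assoc, Rinv_r by lra. lra.
Qed.

Lemma Rpower_e1_t e t : 0 < t -> Rpower t (e - 1) * t = Rpower t e.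
Proof.
intros Ht. unfold Rpower. rewrite <- (exp_ln t) at 2 by auto. rewrite <- exp_plus. f_equal. ring.
Qed.

Lemma h1_bound e m t : 0 < e <= 1 -> 0 < t <= 1 ->
  0 <= fG e t - pw e t + qq m t <= - e * ln t + / INR (S m).
Proof.
intros He Ht. assert (HN := INRS_pos m). assert (HN1 := INRS_ge1 m).
unfold fG, pw.
set (P := Rpower t (e-1)). set (u := exp (-t)). set (y := (1 - t / INR (S m))^(S m)).
assert (Hq := qq_id m t). fold y in Hq.
assert (HPt := Rpower_e1_t e t (proj1 Ht)). fold P in HPt.
assert (Hl := ln_nonpos t (proj1 Ht) (proj2 Ht)).
assert (Hte : Rpower t e <= 1). { unfold Rpower. apply exp_le_1. nra. }
assert (Hte2 : 1 - Rpower t e <= - e * ln t). { unfold Rpower. generalize (exp_ineq1_le (e * ln t)). lra. }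
assert (Hu : 0 <= 1 - u <= t). { unfold u. split. assert (exp (-t) <= 1) by (apply exp_le_1; lra). lra. generalize (exp_ineq1_le (-t)). lra. }
assert (Huy := exp_minus_pow t (INR (S m)) (S m) eq_refl HN1 (conj (Rlt_le _ _ (proj1 Ht)) (Rle_trans _ _ _ (proj2 Ht) HN1))).
fold u y in Huy.
assert (Hu1 : u <= 1) by lra.
assert (Huy2 : u - y <= t^2 / INR (S m)).
{ apply Rle_trans with (t^2 * u / INR (S m)). lra. unfold Rdiv. apply Rmult_le_compat_r.
  left; apply Rinv_0_lt_compat; lra. assert (0 <= t^2) by (apply pow2_ge_0). nra. }
assert (Heq : t * (P * u - P + qq m t) = (1 - Rpower t e) * (1 - u) + (u - y)).
{ rewrite Rmult_plus_distr_l, Hq, <- HPt. ring. }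
assert (Ht0 : 0 < t) by lra.
assert (A1 : 0 <= (1 - Rpower t e) * (1 - u)) by (apply Rmult_le_pos; lra).
assert (A2 : (1 - Rpower t e) * (1 - u) <= (- e * ln t) * t) by (apply Rmult_le_compat; lra).
assert (A3 : t^2 / INR (S m) <= t * / INR (S m)).
{ unfold Rdiv. apply Rmult_le_compat_r. left; apply Rinv_0_lt_compat; lra. simpl. nra. }
split.
- apply Rmult_le_reg_l with t. auto. rewrite Heq. lra.
- apply Rmult_le_reg_l with t. auto. rewrite Heq. nra.
Qed.

Lemma h2_bound e m t : 0 < e <= 1 -> 1 <= t <= INR (S m) ->
  0 <= fG e t + qq m t - / t <= (e + / INR (S m)) * (t * exp (- t)).
Proof.
intros He Ht. assert (HN := INRS_pos m). assert (HN1 := INRS_ge1 m).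
unfold fG.
set (P := Rpower t (e-1)). set (u := exp (-t)). set (y := (1 - t / INR (S m))^(S m)).
assert (Ht0 : 0 < t) by lra.
assert (Hq := qq_id m t). fold y in Hq.
assert (HPt := Rpower_e1_t e t Ht0). fold P in HPt.
assert (Hl := ln_nonneg t (proj1 Ht)).
assert (Hl2 := ln_le_xm1 t Ht0).
assert (Hte : 1 <= Rpower t e). { unfold Rpower. apply exp_ge_1. nra. }
assert (Hte2 : Rpower t e <= t). { unfold Rpower. rewrite <- (exp_ln t) at 2 by auto.
   destruct (Req_dec (e * ln t) (ln t)) as [E|E]. rewrite E; lra. left. apply exp_increasing. nra. }
assert (Hte3 : Rpower t e - 1 <= e * ln t * Rpower t e).
{ unfold Rpower. apply exp_m1_le. nra. }
assert (Hu0 : 0 < u) by apply exp_pos.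
assert (Huy := exp_minus_pow t (INR (S m)) (S m) eq_refl HN1 (conj (Rlt_le _ _ Ht0) (proj2 Ht))).
fold u y in Huy.
assert (Heq : t * (P * u + qq m t - / t) = (Rpower t e - 1) * u + (u - y)).
{ unfold Rminus. rewrite Rmult_plus_distr_l, Rmult_plus_distr_l, Hq, <- HPt.
  field. lra. }
assert (B1 : (Rpower t e - 1) * u <= e * t * t * u).
{ apply Rmult_le_compat_r. lra. apply Rle_trans with (e * ln t * Rpower t e). auto.
  assert (0 <= e * ln t) by nra. apply Rle_trans with (e * ln t * t). apply Rmult_le_compat_l; auto.
  apply Rmult_le_compat_r. lra. nra. }
assert (B2 : u - y <= t^2 * u / INR (S m)) by lra.
assert (Hinv : 0 < / INR (S m)) by (apply Rinv_0_lt_compat; lra).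
split.
- apply Rmult_le_reg_l with t. auto. rewrite Heq, Rmult_0_r.
  apply Rplus_le_le_0_compat. apply Rmult_le_pos; lra. lra.
- apply Rmult_le_reg_l with t. auto. rewrite Heq.
  replace (t * ((e + / INR (S m)) * (t * u))) with (e * t * t * u + t^2 * u / INR (S m)) by (field; lra).
  lra.
Qed.

Lemma h3_bound e t : 0 < e <= 1 -> 1 <= t -> 0 <= fG e t <= exp (- t).
Proof.
intros He Ht. unfold fG, Rpower. assert (0 < exp (-t)) by apply exp_pos.
assert (0 < exp ((e-1) * ln t)) by apply exp_pos.
assert (exp ((e-1) * ln t) <= 1). apply exp_le_1. assert (0 <= ln t) by (apply ln_nonneg; auto). nra.
split. nra. nra.
Qed.

Lemma RInt_plusR (f g : R -> R) a b : ex_RInt f a b -> ex_RInt g a b ->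
  RInt (fun t => f t + g t) a b = RInt f a b + RInt g a b.
Proof. intros. apply (RInt_plus (V:=R_CompleteNormedModule)); auto. Qed.

Lemma RInt_minusR (f g : R -> R) a b : ex_RInt f a b -> ex_RInt g a b ->
  RInt (fun t => f t - g t) a b = RInt f a b - RInt g a b.
Proof. intros. apply (RInt_minus (V:=R_CompleteNormedModule)); auto. Qed.

Lemma RInt_ChaslesR (f : R -> R) a b c : ex_RInt f a b -> ex_RInt f b c ->
  RInt f a b + RInt f b c = RInt f a c.
Proof. intros. apply (RInt_Chasles (V:=R_CompleteNormedModule)); auto. Qed.

Lemma ex_RInt_der (f : R -> R) a b :
  (forall t, Rmin a b <= t <= Rmax a b -> ex_derive f t) -> ex_RInt f a b.
Proof.
intros H. apply (ex_RInt_continuous (V:=R_CompleteNormedModule)). intros z Hz.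
apply (ex_derive_continuous (K:=R_AbsRing) (V:=R_NormedModule)). auto.
Qed.

Lemma is_RInt_der (F f : R -> R) a b :
  (forall t, Rmin a b <= t <= Rmax a b -> is_derive F t (f t)) ->
  (forall t, Rmin a b <= t <= Rmax a b -> ex_derive f t) ->
  is_RInt f a b (F b - F a).
Proof.
intros H1 H2. apply (is_RInt_derive (V:=R_CompleteNormedModule) F f a b H1).
intros x Hx. apply (ex_derive_continuous (K:=R_AbsRing) (V:=R_NormedModule)). auto.
Qed.

Lemma RInt_bound (f g : R -> R) u v G : u <= v -> ex_RInt f u v -> is_RInt g u v G ->
  (forall x, u < x < v -> 0 <= f x <= g x) -> 0 <= RInt f u v <= G.
Proof.
intros Huv Hf Hg H. split.
- apply RInt_ge_0; auto. intros x Hx. apply H; auto.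
- rewrite <- (is_RInt_unique g u v G Hg). apply RInt_le; auto.
  exists G; auto. intros x Hx; apply H; auto.
Qed.

Lemma min_pos a b : 0 < a -> 0 < b -> 0 < Rmin a b.
Proof. intros. unfold Rmin. destruct Rle_dec; auto. Qed.

Lemma ex_RInt_fG e a b : 0 < a -> 0 < b -> ex_RInt (fG e) a b.
Proof.
intros Ha Hb. apply ex_RInt_der. intros t Ht. assert (0 < t) by (generalize (min_pos a b Ha Hb); lra).
unfold fG, Rpower. auto_derive. auto.
Qed.

Lemma ex_RInt_pw e a b : 0 < a -> 0 < b -> ex_RInt (pw e) a b.
Proof.
intros Ha Hb. apply ex_RInt_der. intros t Ht. assert (0 < t) by (generalize (min_pos a b Ha Hb); lra).
unfold pw, Rpower. auto_derive. auto.
Qed.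

Lemma ex_RInt_inv a b : 0 < a -> 0 < b -> ex_RInt (fun t => / t) a b.
Proof.
intros Ha Hb. apply ex_RInt_der. intros t Ht. assert (0 < t) by (generalize (min_pos a b Ha Hb); lra).
auto_derive. lra.
Qed.

Definition Hs (m : nat) := sum_f_R0 (fun k => / INR (S k)) m.

Lemma is_RInt_qq m : is_RInt (qq m) 0 (INR (S m)) (Hs m).
Proof.
assert (HN := INRS_pos m).
assert (H := is_RInt_scal (V:=R_NormedModule) _ _ _ (/ INR (S m)) _ (is_RInt_sum_pow (INR (S m)) m HN)).
replace (Hs m) with (scal (/ INR (S m)) (INR (S m) * Hs m)). apply H.
change (/ INR (S m) * (INR (S m) * Hs m) = Hs m). field. lra.
Qed.

Lemma ex_RInt_qq m u v : 0 <= u <= v -> v <= INR (S m) -> ex_RInt (qq m) u v.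
Proof.
intros H1 H2. assert (E : ex_RInt (qq m) 0 (INR (S m))) by (eexists; apply is_RInt_qq).
apply (ex_RInt_Chasles_2 (V:=R_CompleteNormedModule) _ 0). lra.
apply (ex_RInt_Chasles_1 (V:=R_CompleteNormedModule) _ _ _ (INR (S m))). lra. auto.
Qed.

Lemma is_RInt_pw e a : 0 < e -> 0 < a -> is_RInt (pw e) a 1 ((1 - Rpower a e) / e).
Proof.
intros He Ha.
replace ((1 - Rpower a e) / e) with ((fun t => exp (e * ln t) / e) 1 - (fun t => exp (e * ln t) / e) a).
2: { simpl. rewrite ln_1, Rmult_0_r, exp_0. unfold Rpower. field. lra. }
apply (is_RInt_der (fun t => exp (e * ln t) / e)).
- intros t Ht. assert (0 < t) by (generalize (min_pos a 1 Ha Rlt_0_1); lra).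
  auto_derive. auto. assert (HH := Rpower_e1_t e t H). unfold pw. unfold Rpower in *. rewrite <- HH. field. split; lra.
- intros t Ht. assert (0 < t) by (generalize (min_pos a 1 Ha Rlt_0_1); lra).
  unfold pw, Rpower. auto_derive. auto.
Qed.

Lemma is_RInt_inv N : 1 <= N -> is_RInt (fun t => / t) 1 N (ln N).
Proof.
intros HN. replace (ln N) with (ln N - ln 1) by (rewrite ln_1; ring).
apply is_RInt_der.
- intros t Ht. assert (0 < t) by (generalize (min_pos 1 N Rlt_0_1 (Rlt_le_trans _ _ _ Rlt_0_1 HN)); lra).
  auto_derive. auto. field. lra.
- intros t Ht. assert (0 < t) by (generalize (min_pos 1 N Rlt_0_1 (Rlt_le_trans _ _ _ Rlt_0_1 HN)); lra).
  auto_derive. lra.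
Qed.

Lemma exp1_ge2 : 2 <= exp 1.
Proof. generalize (exp_ineq1_le 1). lra. Qed.

Lemma expm_le_inv N : 0 < N -> exp (- N) <= / N.
Proof.
intros HN. rewrite exp_Ropp. apply Rinv_le_contravar. auto. generalize (exp_ineq1_le N). lra.
Qed.

Theorem finite_bound e m a b : 0 < e <= 1 -> 0 < a <= 1 -> INR (S m) <= b ->
  0 <= RInt (fG e) a b - (1 - Rpower a e) / e + Hs m - ln (INR (S m))
    <= 2 * e + 3 / INR (S m) + a.
Proof.
intros He Ha Hb. revert Hb.
remember (INR (S m)) as N eqn:HNd. intros Hb.
assert (HN : 0 < N) by (rewrite HNd; apply INRS_pos). assert (HN1 : 1 <= N) by (rewrite HNd; apply INRS_ge1).
assert (Hb0 : 0 < b) by lra.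
assert (C1 : RInt (fG e) a b = RInt (fG e) a 1 + RInt (fG e) 1 N + RInt (fG e) N b).
{ rewrite RInt_ChaslesR. rewrite RInt_ChaslesR. auto.
  apply ex_RInt_fG; lra. apply ex_RInt_fG; lra. apply ex_RInt_fG; lra. apply ex_RInt_fG; lra. }
assert (C2 : Hs m = RInt (qq m) 0 a + RInt (qq m) a 1 + RInt (qq m) 1 N).
{ rewrite <- (is_RInt_unique _ _ _ _ (is_RInt_qq m)). rewrite <- HNd.
  rewrite RInt_ChaslesR. rewrite RInt_ChaslesR. auto.
  apply ex_RInt_qq; lra. apply ex_RInt_qq; lra. apply ex_RInt_qq; lra. apply ex_RInt_qq; lra. }
assert (C3 : (1 - Rpower a e) / e = RInt (pw e) a 1).
{ symmetry. apply is_RInt_unique. apply is_RInt_pw; lra. }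
assert (C4 : ln N = RInt (fun t => / t) 1 N).
{ symmetry. apply is_RInt_unique. apply is_RInt_inv; lra. }
assert (D1 : RInt (fun t => fG e t - pw e t + qq m t) a 1 = RInt (fG e) a 1 - RInt (pw e) a 1 + RInt (qq m) a 1).
{ rewrite RInt_plusR. rewrite RInt_minusR. auto.
  apply ex_RInt_fG; lra. apply ex_RInt_pw; lra.
  apply (ex_RInt_minus (V:=R_NormedModule)). apply ex_RInt_fG; lra. apply ex_RInt_pw; lra.
  apply ex_RInt_qq; lra. }
assert (D2 : RInt (fun t => fG e t + qq m t - / t) 1 N = RInt (fG e) 1 N + RInt (qq m) 1 N - RInt (fun t => / t) 1 N).
{ rewrite RInt_minusR. rewrite RInt_plusR. auto.
  apply ex_RInt_fG; lra. apply ex_RInt_qq; lra.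
  apply (ex_RInt_plus (V:=R_NormedModule)). apply ex_RInt_fG; lra. apply ex_RInt_qq; lra.
  apply ex_RInt_inv; lra. }
assert (Eq : RInt (fG e) a b - (1 - Rpower a e) / e + Hs m - ln N =
   RInt (fun t => fG e t - pw e t + qq m t) a 1 + RInt (fun t => fG e t + qq m t - / t) 1 N
   + RInt (fG e) N b + RInt (qq m) 0 a).
{ rewrite D1, D2, C1, C2, C3, C4. ring. }
rewrite Eq.
assert (B1 : 0 <= RInt (fun t => fG e t - pw e t + qq m t) a 1 <= e + / N).
{ assert (I1 : is_RInt (fun t => - e * ln t + / N) a 1
     ((fun t => - e * (t * ln t - t) + t / N) 1 - (fun t => - e * (t * ln t - t) + t / N) a)).
  { apply (is_RInt_der (fun t => - e * (t * ln t - t) + t / N)).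
    - intros t Ht. assert (0 < t) by (generalize (min_pos a 1 (proj1 Ha) Rlt_0_1); lra).
      auto_derive. auto. field. split; lra.
    - intros t Ht. assert (0 < t) by (generalize (min_pos a 1 (proj1 Ha) Rlt_0_1); lra).
      auto_derive. auto. }
  destruct (RInt_bound _ _ a 1 _ (proj2 Ha) (ex_RInt_plus (V:=R_NormedModule) _ _ _ _
     (ex_RInt_minus (V:=R_NormedModule) _ _ _ _ (ex_RInt_fG e a 1 (proj1 Ha) Rlt_0_1) (ex_RInt_pw e a 1 (proj1 Ha) Rlt_0_1))
     (ex_RInt_qq m a 1 ltac:(lra) ltac:(lra))) I1) as [L U].
  { intros x Hx. rewrite HNd. apply h1_bound; lra. }
  split; auto. eapply Rle_trans. apply U. simpl. rewrite ln_1.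
  assert (a * ln a <= 0). { assert (ln a <= 0) by (apply ln_nonpos; lra). nra. }
  assert (0 <= a / N) by (apply Rdiv_le_0_compat; lra).
  unfold Rdiv. nra. }
assert (B2 : 0 <= RInt (fun t => fG e t + qq m t - / t) 1 N <= e + / N).
{ assert (I2 : is_RInt (fun t => (e + / N) * (t * exp (- t))) 1 N
     ((fun t => (e + / N) * (- (t + 1) * exp (- t))) N - (fun t => (e + / N) * (- (t + 1) * exp (- t))) 1)).
  { apply (is_RInt_der (fun t => (e + / N) * (- (t + 1) * exp (- t)))).
    - intros t Ht. auto_derive. auto. ring.
    - intros t Ht. auto_derive. auto. }
  destruct (RInt_bound _ _ 1 N _ HN1 (ex_RInt_minus (V:=R_NormedModule) _ _ _ _ (ex_RInt_plus (V:=R_NormedModule) _ _ _ _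
     (ex_RInt_fG e 1 N Rlt_0_1 HN) (ex_RInt_qq m 1 N ltac:(lra) ltac:(lra))) (ex_RInt_inv 1 N Rlt_0_1 HN)) I2) as [L U].
  { intros x Hx. rewrite HNd. apply h2_bound; lra. }
  split; auto. eapply Rle_trans. apply U. simpl.
  assert (0 < / N) by (apply Rinv_0_lt_compat; lra).
  assert (0 <= (N + 1) * exp (- N)) by (assert (0 < exp (-N)) by apply exp_pos; nra).
  assert (exp (Ropp 1) <= / 2). { rewrite exp_Ropp. apply Rinv_le_contravar. lra. apply exp1_ge2. }
  assert ((e + / N) * (2 * exp (Ropp 1)) <= e + / N) by nra.
  replace (1 + 1) with 2 by ring. nra. }
assert (B3 : 0 <= RInt (fG e) N b <= / N).
{ assert (I3 : is_RInt (fun t => exp (- t)) N b ((fun t => - exp (- t)) b - (fun t => - exp (- t)) N)).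
  { apply (is_RInt_der (fun t => - exp (- t))).
    - intros t Ht. auto_derive. auto. ring.
    - intros t Ht. auto_derive. auto. }
  destruct (RInt_bound _ _ N b _ Hb (ex_RInt_fG e N b HN Hb0) I3) as [L U].
  { intros x Hx. apply h3_bound; lra. }
  split; auto. eapply Rle_trans. apply U. simpl.
  assert (0 < exp (-b)) by apply exp_pos. generalize (expm_le_inv N HN). lra. }
assert (B4 : 0 <= RInt (qq m) 0 a <= a).
{ assert (I4 : is_RInt (fun _ => 1) 0 a ((fun t => t) a - (fun t => t) 0)).
  { apply (is_RInt_der (fun t => t)).
    - intros t Ht. auto_derive. auto. ring.
    - intros t Ht. auto_derive. auto. }
  destruct (RInt_bound _ _ 0 a _ ltac:(lra) (ex_RInt_qq m 0 a ltac:(lra) ltac:(lra)) I4) as [L U].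
  { intros x Hx. split. apply qq_bounds. lra. apply qq_bounds. lra. }
  split; auto. simpl in U. lra. }
unfold Rdiv. lra.
Qed.

Lemma ballR (x eps y : R) : Rabs (y - x) < eps -> ball x eps y.
Proof. intros H. exact H. Qed.
Lemma ballR' (x eps y : R) : ball x eps y -> Rabs (y - x) < eps.
Proof. intros H. exact H. Qed.

Lemma is_RInt_pw_gen e u v : 0 < e -> 0 < u -> 0 < v -> is_RInt (pw e) u v ((Rpower v e - Rpower u e) / e).
Proof.
intros He Hu Hv.
replace ((Rpower v e - Rpower u e) / e) with ((fun t => exp (e * ln t) / e) v - (fun t => exp (e * ln t) / e) u).
2: { simpl. unfold Rpower. field. lra. }
apply (is_RInt_der (fun t => exp (e * ln t) / e)).
- intros t Ht. assert (0 < t) by (generalize (min_pos u v Hu Hv); lra).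
  auto_derive. auto. assert (HH := Rpower_e1_t e t H). unfold pw. unfold Rpower in *. rewrite <- HH. field. split; lra.
- intros t Ht. assert (0 < t) by (generalize (min_pos u v Hu Hv); lra).
  unfold pw, Rpower. auto_derive. auto.
Qed.

Lemma fG_le_pw e t : 0 < t -> 0 <= fG e t <= pw e t.
Proof.
intros Ht. unfold fG, pw, Rpower. assert (0 < exp ((e-1) * ln t)) by apply exp_pos.
assert (0 < exp (-t)) by apply exp_pos. assert (exp (-t) <= 1) by (apply exp_le_1; lra). nra.
Qed.

Lemma K_diff e u v : 0 < e -> 0 < u <= v -> 0 <= RInt (fG e) u v <= (Rpower v e - Rpower u e) / e.
Proof.
intros He Huv. apply (RInt_bound _ (pw e)). lra. apply ex_RInt_fG; lra.
apply is_RInt_pw_gen; lra. intros x Hx. apply fG_le_pw. lra.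
Qed.

Lemma G_diff e u v : 0 < e <= 1 -> 1 <= u <= v -> 0 <= RInt (fG e) u v <= exp (- u) - exp (- v).
Proof.
intros He Huv.
assert (I3 : is_RInt (fun t => exp (- t)) u v ((fun t => - exp (- t)) v - (fun t => - exp (- t)) u)).
{ apply (is_RInt_der (fun t => - exp (- t))).
  - intros t Ht. auto_derive. auto. ring.
  - intros t Ht. auto_derive. auto. }
destruct (RInt_bound _ _ u v _ ltac:(lra) (ex_RInt_fG e u v ltac:(lra) ltac:(lra)) I3) as [L U].
{ intros x Hx. apply h3_bound; lra. }
simpl in U. lra.
Qed.

Lemma RInt_swapR (f : R -> R) a b : ex_RInt f a b -> RInt f b a = - RInt f a b.
Proof. intros H. rewrite <- (opp_RInt_swap (V:=R_CompleteNormedModule) f a b H). reflexivity. Qed.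

Lemma K_lim e : 0 < e <= 1 -> exists LK, filterlim (fun a => RInt (fG e) a 1) (at_right 0) (locally LK).
Proof.
intros He. apply (filterlim_locally_cauchy (F := at_right 0)). intros eps.
assert (Hc : 0 < e * eps) by (apply Rmult_lt_0_compat; [lra| apply cond_pos]).
set (d := exp (ln (e * eps) / e)). assert (Hd : 0 < d) by apply exp_pos.
assert (Hsmall : forall u, 0 < u < d -> 0 < Rpower u e < e * eps).
{ intros u Hu. split. apply exp_pos. unfold Rpower. rewrite <- (exp_ln (e * eps)) by auto.
  apply exp_increasing. assert (ln u < ln d) by (apply ln_increasing; lra).
  unfold d in H. rewrite ln_exp in H. apply Rmult_lt_reg_r with (/ e). apply Rinv_0_lt_compat; lra.
  replace (e * ln u * / e) with (ln u) by (field; lra). auto. }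
exists (fun u => 0 < u < d). split.
- exists (mkposreal d Hd). intros y Hy Hy0. apply ballR' in Hy. simpl in Hy.
  rewrite Rminus_0_r in Hy. apply Rabs_def2 in Hy. lra.
- intros u v Hu Hv. apply ballR.
  assert (Huv : RInt (fG e) v 1 - RInt (fG e) u 1 = - RInt (fG e) u v).
  { rewrite <- (RInt_ChaslesR (fG e) u v 1). ring. apply ex_RInt_fG; lra. apply ex_RInt_fG; lra. }
  rewrite Huv, Rabs_Ropp.
  destruct (Hsmall u Hu) as [A1 A2]. destruct (Hsmall v Hv) as [A3 A4].
  assert (He' : 0 < / e) by (apply Rinv_0_lt_compat; lra).
  assert (Bd : e * eps / e = eps) by (field; lra).
  destruct (Rle_lt_dec u v) as [Hle|Hlt].
  + destruct (K_diff e u v ltac:(lra) ltac:(lra)) as [L U].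
    rewrite Rabs_pos_eq by lra. eapply Rle_lt_trans. apply U. unfold Rdiv in *. 
    rewrite <- Bd. apply Rmult_lt_compat_r; lra.
  + rewrite RInt_swapR, Rabs_Ropp. 2: apply ex_RInt_fG; lra.
    destruct (K_diff e v u ltac:(lra) ltac:(lra)) as [L U].
    rewrite Rabs_pos_eq by lra. eapply Rle_lt_trans. apply U. unfold Rdiv in *.
    rewrite <- Bd. apply Rmult_lt_compat_r; lra.
Qed.

Lemma G_lim e : 0 < e <= 1 -> exists LG, filterlim (fun b => RInt (fG e) 1 b) (Rbar_locally p_infty) (locally LG).
Proof.
intros He. apply (filterlim_locally_cauchy (F := Rbar_locally p_infty)). intros eps.
assert (He0 := cond_pos eps).
set (M := Rmax 1 (- ln eps)).
assert (Hsmall : forall u, M < u -> 0 < exp (- u) < eps).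
{ intros u Hu. split. apply exp_pos. rewrite <- (exp_ln eps) by auto. apply exp_increasing.
  assert (- ln eps <= M) by apply Rmax_r. lra. }
exists (fun u => M < u). split.
- exists M. auto.
- intros u v Hu Hv. apply ballR.
  assert (M1 : 1 <= M) by apply Rmax_l.
  assert (Huv : RInt (fG e) 1 v - RInt (fG e) 1 u = RInt (fG e) u v).
  { rewrite <- (RInt_ChaslesR (fG e) 1 u v). ring. apply ex_RInt_fG; lra. apply ex_RInt_fG; lra. }
  rewrite Huv.
  destruct (Hsmall u Hu) as [A1 A2]. destruct (Hsmall v Hv) as [A3 A4].
  destruct (Rle_lt_dec u v) as [Hle|Hlt].
  + destruct (G_diff e u v ltac:(lra) ltac:(lra)) as [L U].
    rewrite Rabs_pos_eq by lra. lra.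
  + rewrite RInt_swapR, Rabs_Ropp. 2: apply ex_RInt_fG; lra.
    destruct (G_diff e v u ltac:(lra) ltac:(lra)) as [L U].
    rewrite Rabs_pos_eq by lra. lra.
Qed.

Lemma rpow_small e c : 0 < e -> 0 < c -> exists d, 0 < d /\ forall u, 0 < u < d -> Rpower u e < c.
Proof.
intros He Hc. exists (exp (ln c / e)). split. apply exp_pos.
intros u Hu. unfold Rpower. rewrite <- (exp_ln c) by auto.
apply exp_increasing. assert (ln u < ln (exp (ln c / e))) by (apply ln_increasing; lra).
rewrite ln_exp in H. apply Rmult_lt_reg_r with (/ e). apply Rinv_0_lt_compat; lra.
replace (e * ln u * / e) with (ln u) by (field; lra). auto.
Qed.

Lemma at_right_lt c : 0 < c -> at_right 0 (fun a => 0 < a < c).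
Proof.
intros Hc. exists (mkposreal c Hc). intros y Hy Hy0. apply ballR' in Hy. simpl in Hy.
rewrite Rminus_0_r in Hy. apply Rabs_def2 in Hy. lra.
Qed.

Lemma Gamma_split e LK LG : 0 < e <= 1 ->
  filterlim (fun a => RInt (fG e) a 1) (at_right 0) (locally LK) ->
  filterlim (fun b => RInt (fG e) 1 b) (Rbar_locally p_infty) (locally LG) ->
  Gamma e = LK + LG.
Proof.
intros He HK HG. unfold Gamma. apply is_RInt_gen_unique.
intros P [eps HP].
rewrite filterlim_locally in HK. rewrite filterlim_locally in HG.
specialize (HK (pos_div_2 eps)). specialize (HG (pos_div_2 eps)).
apply Filter_prod with (Q := fun a => (0 < a < 1) /\ ball LK (pos_div_2 eps) (RInt (fG e) a 1))
  (R := fun b => 1 < b /\ ball LG (pos_div_2 eps) (RInt (fG e) 1 b)).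
- apply filter_and. apply at_right_lt; lra. exact HK.
- apply filter_and. exists 1. auto. exact HG.
- intros a b [Ha HKa] [Hb HGb]. simpl.
  exists (RInt (fG e) a b). split.
  + apply (RInt_correct (V:=R_CompleteNormedModule)). apply ex_RInt_fG; lra.
  + apply HP. apply ballR. apply ballR' in HKa. apply ballR' in HGb. simpl in HKa, HGb.
    rewrite <- (RInt_ChaslesR (fG e) a 1 b). 2,3: apply ex_RInt_fG; lra.
    replace (RInt (fG e) a 1 + RInt (fG e) 1 b - (LK + LG)) with
      ((RInt (fG e) a 1 - LK) + (RInt (fG e) 1 b - LG)) by ring.
    eapply Rle_lt_trans. apply Rabs_triang. lra.
Qed.

Theorem Gamma_bound e m : 0 < e <= 1 ->
  0 <= Gamma e - / e + Hs m - ln (INR (S m)) <= 2 * e + 3 / INR (S m).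
Proof.
intros He.
destruct (K_lim e He) as [LK HK]. destruct (G_lim e He) as [LG HG].
rewrite (Gamma_split e LK LG He HK HG).
assert (HN := INRS_pos m).
set (X := LK + LG - / e + Hs m - ln (INR (S m))).
assert (Main : forall eta, 0 < eta -> - eta <= X <= 2 * e + 3 / INR (S m) + eta).
{ intros eta Heta.
  assert (He4 : 0 < e * (eta / 4)) by (apply Rmult_lt_0_compat; lra).
  destruct (rpow_small e (e * (eta / 4)) (proj1 He) He4) as [d [Hd Hd2]].
  rewrite filterlim_locally in HK. rewrite filterlim_locally in HG.
  assert (Heta4 : 0 < eta / 4) by lra.
  specialize (HK (mkposreal _ Heta4)). specialize (HG (mkposreal _ Heta4)).
  assert (FA : at_right 0 (fun a => (0 < a < Rmin 1 (Rmin (eta / 4) d)) /\ ball LK (eta / 4) (RInt (fG e) a 1))).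
  { apply filter_and. apply at_right_lt. apply min_pos. lra. apply min_pos; lra. exact HK. }
  destruct (filter_ex (F := at_right 0) _ FA) as [a [Ha HKa]].
  assert (FB : Rbar_locally p_infty (fun b => INR (S m) < b /\ ball LG (eta / 4) (RInt (fG e) 1 b))).
  { apply filter_and. exists (INR (S m)). auto. exact HG. }
  destruct (filter_ex (F := Rbar_locally p_infty) _ FB) as [b [Hb HGb]].
  apply ballR' in HKa. apply ballR' in HGb. simpl in HKa, HGb.
  assert (M1 : Rmin 1 (Rmin (eta / 4) d) <= 1) by apply Rmin_l.
  assert (M2 : Rmin 1 (Rmin (eta / 4) d) <= Rmin (eta / 4) d) by apply Rmin_r.
  assert (M3 : Rmin (eta / 4) d <= eta / 4) by apply Rmin_l.
  assert (M4 : Rmin (eta / 4) d <= d) by apply Rmin_r.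
  destruct (finite_bound e m a b He ltac:(lra) ltac:(lra)) as [F1 F2].
  rewrite <- (RInt_ChaslesR (fG e) a 1 b) in F1, F2. 2,3,4,5: apply ex_RInt_fG; lra.
  assert (Hpa := Hd2 a ltac:(lra)).
  assert (Hpa0 : 0 < Rpower a e) by apply exp_pos.
  assert (Hpe : Rpower a e / e < eta / 4).
  { apply Rmult_lt_reg_r with e. lra. unfold Rdiv. rewrite Rmult_assoc, Rinv_l by lra. lra. }
  assert (Hpe0 : 0 < Rpower a e / e) by (apply Rdiv_lt_0_compat; lra).
  assert (Eq : (1 - Rpower a e) / e = / e - Rpower a e / e) by (field; lra).
  rewrite Eq in F1, F2.
  apply Rabs_def2 in HKa. apply Rabs_def2 in HGb.
  unfold X. split; lra. }
split.
- apply Rle_plus_epsilon. intros eta Heta. destruct (Main eta Heta). lra.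
- apply Rle_plus_epsilon. intros eta Heta. destruct (Main eta Heta). lra.
Qed.

Definition useq (n : nat) := sum_n_m (fun k => / INR k) 1 n - ln (INR n).

Lemma useq_S m : useq (S m) = Hs m - ln (INR (S m)).
Proof.
unfold useq, Hs. f_equal. rewrite <- sum_n_m_S. rewrite <- sum_n_Reals. reflexivity.
Qed.

Lemma ev_small eta : 0 < eta -> eventually (fun m : nat => 3 / INR (S m) < eta).
Proof.
intros Heta. assert (H := is_lim_seq_INR). apply is_lim_seq_spec in H.
destruct (H (3 / eta)) as [N HN]. exists N. intros n Hn.
specialize (HN n Hn). simpl in HN. rewrite S_INR.
assert (0 < 3 / eta) by (apply Rdiv_lt_0_compat; lra).
apply Rmult_lt_reg_r with (INR n + 1). lra. unfold Rdiv. rewrite Rmult_assoc, Rinv_l by lra.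
apply Rmult_lt_reg_l with (/ eta). apply Rinv_0_lt_compat; lra.
replace (/ eta * (3 * 1)) with (3 / eta) by (unfold Rdiv; ring).
replace (/ eta * (eta * (INR n + 1))) with (INR n + 1) by (field; lra). lra.
Qed.

Lemma useq_cauchy : ex_lim_seq_cauchy useq.
Proof.
intros eps. assert (He := cond_pos eps).
set (e := Rmin 1 (eps / 8)).
assert (He0 : 0 < e <= 1). { split. apply min_pos; lra. apply Rmin_l. }
assert (He1 : e <= eps / 8) by apply Rmin_r.
destruct (ev_small (eps / 2) ltac:(lra)) as [N1 HN1].
exists (S N1). intros n n' Hn Hn'.
destruct n as [|m]. lia. destruct n' as [|m']. lia.
rewrite !useq_S.
destruct (Gamma_bound e m He0) as [A1 A2]. destruct (Gamma_bound e m' He0) as [A3 A4].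
assert (B1 := HN1 m ltac:(lia)). assert (B2 := HN1 m' ltac:(lia)).
apply Rabs_def1; lra.
Qed.

Lemma useq_lim : is_lim_seq useq euler_gamma.
Proof.
assert (H : ex_finite_lim_seq useq) by (apply ex_lim_seq_cauchy_corr, useq_cauchy).
destruct H as [l Hl]. unfold euler_gamma. fold useq.
rewrite (is_lim_seq_unique _ _ Hl). exact Hl.
Qed.

Theorem Gamma_gamma e : 0 < e <= 1 -> 0 <= Gamma e - / e + euler_gamma <= 2 * e.
Proof.
intros He. assert (Hl := useq_lim). apply is_lim_seq_spec in Hl.
assert (Main : forall eta, 0 < eta -> - eta <= Gamma e - / e + euler_gamma <= 2 * e + 2 * eta).
{ intros eta Heta.
  assert (F : eventually (fun m => 3 / INR (S m) < eta /\ Rabs (useq (S m) - euler_gamma) < eta)).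
  { apply filter_and. apply ev_small; auto.
    destruct (Hl (mkposreal eta Heta)) as [N HN]. exists N. intros n Hn. apply HN. lia. }
  destruct (filter_ex (F := eventually) _ F) as [m [Hm1 Hm2]].
  rewrite useq_S in Hm2. destruct (Gamma_bound e m He) as [A1 A2].
  apply Rabs_def2 in Hm2. lra. }
split.
- apply Rle_plus_epsilon. intros eta Heta. destruct (Main eta Heta). lra.
- apply Rle_plus_epsilon. intros eta Heta. destruct (Main (eta/2) ltac:(lra)). lra.
Qed.


Lemma key_alg A B C E R K :
  0 < A -> 0 < B -> 0 < C -> 0 < E -> 0 <= R -> 0 <= K ->
  R <= K * E -> B * C <= A * E -> A * B <= E -> C * C <= A * E -> A * C <= E ->
  A * A * A <= E -> B <= A -> C <= B -> A * A <= B -> E <= B -> B * B * B <= A * A * E ->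
  Rabs (/ (A + B + C + A * A + R) - (/ A - B / (A * A) - C / (A * A) + B * B / (A * A * A) - 1))
    <= (5 * K + 11) * (E / (A * A)).
Proof.
intros HA HB HC HE HR HK H1 H2 H3 H4 H5 H6 H7 H8 H9 H10 H11.
set (D := A * A). set (S' := B + C + D). set (S := S' + R).
set (eps := A + B + C + D + R).
assert (HD : 0 < D) by (unfold D; nra).
assert (Heps : A <= eps) by (unfold eps; lra).
set (X := S * S' - B * B). set (Y := S * (B * B)).
assert (Id : / eps - (/ A - B / D - C / D + B * B / (A * D) - 1) = (- R / A + X / D - Y / (A * D)) / eps).
{ unfold X, Y, S, S', eps, D. field. split; nra. }
unfold D in Id. unfold D.
replace (B * B / (A * A * A)) with (B * B / (A * (A * A))) by (f_equal; ring).
fold D. fold D in Id. unfold eps, D in Id. fold D in Id. fold eps in Id. rewrite Id.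
assert (HX0 : 0 <= X). { unfold X, S, S'. nra. }
assert (HY0 : 0 <= Y). { unfold Y, S, S'. nra. }
assert (HXb : X <= (8 + 3 * K) * (A * E)).
{ unfold X, S, S', D.
  assert (B * (A * A) <= A * E) by nra.
  assert (C * (A * A) <= A * E) by nra.
  assert ((A * A) * (A * A) <= A * E) by nra.
  assert (R * (B + C + A * A) <= K * E * (3 * B)) by (apply Rmult_le_compat; nra).
  assert (K * E * (3 * B) <= 3 * K * (A * E)) by nra.
  nra. }
assert (HYb : Y <= (3 + K) * (A * A * E)).
{ unfold Y, S, S', D.
  assert (B + C + A * A + R <= (3 + K) * B) by nra.
  assert ((B + C + A * A + R) * (B * B) <= (3 + K) * B * (B * B)) by (apply Rmult_le_compat_r; nra).
  nra. }
assert (Hnum : Rabs (- R / A + X / D - Y / (A * D)) <= R / A + X / D + Y / (A * D)).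
{ assert (0 <= R / A) by (apply Rdiv_le_0_compat; lra).
  assert (0 <= X / D) by (apply Rdiv_le_0_compat; lra).
  assert (0 <= Y / (A * D)) by (apply Rdiv_le_0_compat; nra).
  apply Rabs_le. unfold Rdiv in *. lra. }
assert (Hepsp : 0 < eps) by lra.
unfold Rdiv at 1. rewrite Rabs_mult, (Rabs_pos_eq (/ eps)) by (left; apply Rinv_0_lt_compat; lra).
apply Rle_trans with ((R / A + X / D + Y / (A * D)) * / A).
{ apply Rmult_le_compat. apply Rabs_pos. left; apply Rinv_0_lt_compat; lra. auto.
  apply Rinv_le_contravar; lra. }
assert (E1 : (R / A + X / D + Y / (A * D)) * / A = R / D + X / (A * D) + Y / (D * D)) by (unfold D; field; lra).
rewrite E1.
assert (B1 : R / D <= K * (E / D)). { unfold Rdiv. rewrite <- Rmult_assoc. apply Rmult_le_compat_r. left; apply Rinv_0_lt_compat; lra. auto. }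
assert (B2 : X / (A * D) <= (8 + 3 * K) * (E / D)).
{ replace ((8 + 3 * K) * (E / D)) with ((8 + 3 * K) * (A * E) / (A * D)) by (field; lra).
  unfold Rdiv. apply Rmult_le_compat_r. left; apply Rinv_0_lt_compat; nra. auto. }
assert (B3 : Y / (D * D) <= (3 + K) * (E / D)).
{ replace ((3 + K) * (E / D)) with ((3 + K) * (A * A * E) / (D * D)) by (unfold D; field; lra).
  unfold Rdiv. apply Rmult_le_compat_r. left; apply Rinv_0_lt_compat; nra. auto. }
lra.
Qed.


Definition pp (n x : R) := / Rpower n x.

Lemma Rpower_pos n x : 0 < Rpower n x.
Proof. apply exp_pos. Qed.

Lemma pp_pos n x : 0 < pp n x.
Proof. apply Rinv_0_lt_compat, Rpower_pos. Qed.

Lemma pp_mult a b x : 0 < a -> 0 < b -> pp (a * b) x = pp a x * pp b x.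
Proof. intros. unfold pp. rewrite <- Rpower_mult_distr by auto. field. split; apply Rgt_not_eq, Rpower_pos. Qed.

Lemma pp_anti a b x : 0 < a <= b -> 0 <= x -> pp b x <= pp a x.
Proof. intros. unfold pp. apply Rinv_le_contravar. apply Rpower_pos. apply Rle_Rpower_l; lra. Qed.

Lemma Rpower_1_l x : Rpower 1 x = 1.
Proof. unfold Rpower. rewrite ln_1, Rmult_0_r. apply exp_0. Qed.

Lemma Rpower_div a b x : 0 < a -> 0 < b -> Rpower (a / b) x = Rpower a x / Rpower b x.
Proof.
intros Ha Hb. unfold Rdiv. rewrite <- Rpower_mult_distr by (auto; apply Rinv_0_lt_compat; auto).
f_equal. unfold Rpower. rewrite ln_Rinv by auto. rewrite <- exp_Ropp. f_equal. ring.
Qed.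

Definition cc (k : nat) := / (2 * INR k + 9).

Lemma cc_pos k : 0 < 2 * INR k + 9.
Proof. generalize (pos_INR k). lra. Qed.

Lemma cc_lim : is_lim_seq cc 0.
Proof.
apply is_lim_seq_spec. intros eps.
assert (H := is_lim_seq_INR). apply is_lim_seq_spec in H.
destruct (H (/ eps)) as [N HN]. exists N. intros n Hn. specialize (HN n Hn). simpl in HN.
assert (He := cond_pos eps). unfold cc. rewrite Rminus_0_r.
assert (Hp := cc_pos n).
rewrite Rabs_pos_eq by (left; apply Rinv_0_lt_compat; lra).
apply Rmult_lt_reg_r with (2 * INR n + 9). lra. rewrite Rinv_l by lra.
apply Rmult_lt_reg_l with (/ eps). apply Rinv_0_lt_compat; lra.
replace (/ eps * (eps * (2 * INR n + 9))) with (2 * INR n + 9) by (field; lra).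
generalize (pos_INR n). lra.
Qed.

Lemma cc_telesc : is_series (fun k => cc k - cc (S k)) (cc 0).
Proof.
assert (Hs : forall n, sum_n (fun k => cc k - cc (S k)) n = cc 0 - cc (S n)).
{ induction n as [|n IH]. rewrite sum_O. reflexivity.
  rewrite sum_Sn, IH. unfold plus; simpl. ring. }
unfold is_series.
assert (H : is_lim_seq (fun n => cc 0 - cc (S n)) (cc 0 - 0)).
{ apply (is_lim_seq_minus' (fun _ => cc 0) (fun n => cc (S n))). apply is_lim_seq_const.
  apply (is_lim_seq_incr_1 cc 0). apply cc_lim. }
rewrite Rminus_0_r in H.
eapply filterlim_ext. 2: exact H. intros n. simpl. rewrite Hs. reflexivity.
Qed.

Definition lterm (x : R) (n : nat) := / Rpower (2 * INR n + 1) x.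

Lemma tail_term_bound x k : 2 <= x ->
  0 <= lterm x (5 + k) <= 121 * pp 11 x * ((cc k - cc (S k)) / 2).
Proof.
intros Hx. unfold lterm.
assert (E : 2 * INR (5 + k) + 1 = 11 * ((2 * INR k + 11) / 11)).
{ rewrite plus_INR. simpl. field. }
assert (Hk : 1 <= (2 * INR k + 11) / 11). { generalize (pos_INR k). intros. apply Rmult_le_reg_r with 11. lra.
  unfold Rdiv. rewrite Rmult_assoc, Rinv_l by lra. lra. }
split. left. apply Rinv_0_lt_compat, Rpower_pos.
rewrite E. fold (pp (11 * ((2 * INR k + 11) / 11)) x). rewrite pp_mult by lra.
replace (121 * pp 11 x * ((cc k - cc (S k)) / 2)) with (pp 11 x * (121 * ((cc k - cc (S k)) / 2))) by ring.
apply Rmult_le_compat_l. left; apply pp_pos.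
apply Rle_trans with (pp ((2 * INR k + 11) / 11) 2).
- unfold pp. apply Rinv_le_contravar. apply Rpower_pos. apply Rle_Rpower; auto.
- unfold pp. replace 2 with (INR 2) at 2 by (simpl; ring). rewrite Rpower_pow by lra.
  unfold cc. rewrite S_INR. generalize (pos_INR k). intros Hk0.
  replace (2 * (INR k + 1) + 9) with (2 * INR k + 11) by ring.
  simpl. rewrite Rmult_1_r.
  apply Rle_trans with (121 * / ((2 * INR k + 9) * (2 * INR k + 11))).
  + replace (/ ((2 * INR k + 11) / 11 * ((2 * INR k + 11) / 11))) with (121 * / ((2 * INR k + 11) * (2 * INR k + 11))) by (field; lra).
    apply Rmult_le_compat_l. lra. apply Rinv_le_contravar. nra. nra.
  + replace ((/ (2 * INR k + 9) - / (2 * INR k + 11)) / 2) with (/ ((2 * INR k + 9) * (2 * INR k + 11))) by (field; lra).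
    lra.
Qed.

Lemma lam_decomp x : 2 <= x -> exists T, dirichlet_lambda x = 1 + pp 3 x + pp 5 x + pp 7 x + pp 9 x + T
   /\ 0 <= T <= 121 / 18 * pp 11 x.
Proof.
intros Hx.
set (c := 121 * pp 11 x / 2).
assert (Etel : ex_series (fun k => cc k - cc (S k))) by (eexists; apply cc_telesc).
assert (Eb : ex_series (fun k => c * (cc k - cc (S k)))).
{ apply (ex_series_ext (fun k => scal c (cc k - cc (S k)))). intros; reflexivity.
  apply (ex_series_scal_l (K:=R_AbsRing) (V:=R_NormedModule) c (fun k => cc k - cc (S k))). auto. }
assert (Bd : forall k, 0 <= lterm x (5 + k) <= c * (cc k - cc (S k))).
{ intros k. destruct (tail_term_bound x k Hx). split; auto. unfold c. lra. }
assert (Et : ex_series (fun k => lterm x (5 + k))).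
{ apply (ex_series_le (K:=R_AbsRing) (V:=R_CompleteNormedModule) _ (fun k => c * (cc k - cc (S k)))); auto.
  intros k. change (norm (lterm x (5+k))) with (Rabs (lterm x (5+k))). rewrite Rabs_pos_eq; apply Bd. }
assert (Ea : ex_series (lterm x)) by (apply (ex_series_incr_n (lterm x) 5); auto).
exists (Series (fun k => lterm x (5 + k))). split.
- unfold dirichlet_lambda. fold (lterm x).
  rewrite (Series_incr_n (lterm x) 5) by (auto; lia). simpl pred.
  cbn [sum_f_R0]. unfold lterm.
  replace (2 * INR 0 + 1) with 1 by (simpl; ring).
  replace (2 * INR 1 + 1) with 3 by (simpl; ring).
  replace (2 * INR 2 + 1) with 5 by (simpl; ring).
  replace (2 * INR 3 + 1) with 7 by (simpl; ring).
  replace (2 * INR 4 + 1) with 9 by (simpl; ring).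
  rewrite Rpower_1_l, Rinv_1. unfold pp. ring.
- split.
  + apply Rle_trans with (Series (fun k => 0 * lterm x (5+k))).
    right. rewrite Series_scal_l. ring.
    apply Series_le. intros n. rewrite Rmult_0_l. split. lra. apply Bd. auto.
  + apply Rle_trans with (Series (fun k => c * (cc k - cc (S k)))).
    apply Series_le. auto. auto.
    rewrite Series_scal_l. rewrite (is_series_unique _ _ cc_telesc). unfold c, cc. simpl. right. field.
Qed.

Lemma pp_le_num m n x : 0 < m <= n -> 0 <= x -> pp n x <= pp m x.
Proof. intros. apply pp_anti; lra. Qed.

Lemma Rpower_small q eta : 0 < q < 1 -> 0 < eta -> exists M, forall x, M < x -> Rpower q x < eta.
Proof.
intros Hq He. assert (Hl : ln q < 0). { rewrite <- ln_1. apply ln_increasing; lra. }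
exists (ln eta / ln q). intros x Hx. unfold Rpower. rewrite <- (exp_ln eta) by auto.
apply exp_increasing.
apply Rmult_lt_reg_r with (/ - ln q). apply Rinv_0_lt_compat; lra.
replace (x * ln q * / - ln q) with (- x) by (field; lra).
replace (ln eta * / - ln q) with (- (ln eta / ln q)) by (field; lra). lra.
Qed.

Lemma pp3_eq x : pp 3 x = Rpower (/ 3) x.
Proof. unfold pp. replace (/ 3) with (1 / 3) by field. rewrite Rpower_div by lra. rewrite Rpower_1_l. field. apply Rgt_not_eq, Rpower_pos. Qed.

Lemma ratio_eq x : pp 11 x / (pp 3 x * pp 3 x) = Rpower (9 / 11) x.
Proof.
rewrite <- pp_mult by lra. rewrite Rpower_div by lra. unfold pp.
replace (3 * 3) with 9 by ring. field. split; apply Rgt_not_eq, Rpower_pos.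
Qed.

Theorem mainTheorem12 :
  is_lim
    (fun x : R =>
       Gamma (dirichlet_lambda x - 1) - Rpower 3 x + Rpower (9 / 5) x
       + Rpower (9 / 7) x - Rpower (27 / 25) x + 1)
    p_infty (- euler_gamma).
Proof.
apply is_lim_spec. intros eps. assert (He := cond_pos eps). simpl.
set (K := 121 / 18). set (M' := 5 * K + 11).
assert (HK : 0 < K) by (unfold K; lra). assert (HM : 0 < M') by (unfold M'; lra).
set (d1 := Rmin (/ (4 + K)) (eps / (4 * (4 + K)))).
assert (Hd1 : 0 < d1). { apply min_pos. apply Rinv_0_lt_compat; lra. apply Rdiv_lt_0_compat; lra. }
assert (Hd1a : d1 <= / (4 + K)) by apply Rmin_l. assert (Hd1b : d1 <= eps / (4 * (4 + K))) by apply Rmin_r.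
destruct (Rpower_small (/ 3) d1 ltac:(lra) Hd1) as [X1 HX1].
destruct (Rpower_small (9 / 11) (eps / (2 * M')) ltac:(lra) ltac:(apply Rdiv_lt_0_compat; lra)) as [X2 HX2].
exists (Rmax 2 (Rmax X1 X2)). intros x Hx.
assert (Hx2 : 2 <= x) by (generalize (Rmax_l 2 (Rmax X1 X2)); lra).
assert (Hx1 : X1 < x) by (generalize (Rmax_r 2 (Rmax X1 X2)) (Rmax_l X1 X2); lra).
assert (Hx3 : X2 < x) by (generalize (Rmax_r 2 (Rmax X1 X2)) (Rmax_r X1 X2); lra).
assert (Hx0 : 0 <= x) by lra.
destruct (lam_decomp x Hx2) as [T [HL [HT0 HT1]]].
set (A := pp 3 x). set (B := pp 5 x). set (C := pp 7 x). set (E := pp 11 x).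
assert (HA : 0 < A) by apply pp_pos. assert (HB : 0 < B) by apply pp_pos.
assert (HC : 0 < C) by apply pp_pos. assert (HE : 0 < E) by apply pp_pos.
assert (H9 : pp 9 x = A * A). { unfold A. rewrite <- pp_mult by lra. f_equal. ring. }
assert (Hmul : forall m n, 0 < m -> 0 < n -> pp m x * pp n x = pp (m * n) x).
{ intros. rewrite pp_mult; auto. }
assert (H1 : B * C <= A * E). { unfold A, B, C, E. rewrite !Hmul by lra. apply pp_le_num; lra. }
assert (H2 : A * B <= E). { unfold A, B, E. rewrite !Hmul by lra. apply pp_le_num; lra. }
assert (H3 : C * C <= A * E). { unfold A, C, E. rewrite !Hmul by lra. apply pp_le_num; lra. }
assert (H4 : A * C <= E). { unfold A, C, E. rewrite !Hmul by lra. apply pp_le_num; lra. }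
assert (H5 : A * A * A <= E). { unfold A, E. rewrite !Hmul by lra. apply pp_le_num; lra. }
assert (H6 : B <= A). { unfold A, B. apply pp_le_num; lra. }
assert (H7 : C <= B). { unfold C, B. apply pp_le_num; lra. }
assert (H8 : A * A <= B). { unfold A, B. rewrite !Hmul by lra. apply pp_le_num; lra. }
assert (H10 : E <= B). { unfold E, B. apply pp_le_num; lra. }
assert (H11 : B * B * B <= A * A * E). { unfold A, B, E. rewrite !Hmul by lra. apply pp_le_num; lra. }
assert (HA1 : A <= 1). { unfold A. rewrite <- (Rinv_1). rewrite <- (Rpower_1_l x). apply pp_le_num; lra. }
assert (Key := key_alg A B C E T K HA HB HC HE HT0 (Rlt_le _ _ HK) HT1 H1 H2 H3 H4 H5 H6 H7 H8 H10 H11).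
set (ep := A + B + C + A * A + T).
assert (Hep : dirichlet_lambda x - 1 = ep). { rewrite HL, H9. unfold ep, A, B, C. ring. }
assert (Hep0 : 0 < ep) by (unfold ep; nra).
assert (HTK : T <= K * A).
{ apply Rle_trans with (K * E). exact HT1. apply Rmult_le_compat_l; lra. }
assert (HAA : A * A <= A) by nra.
assert (Hepb : ep <= (4 + K) * A) by (unfold ep; lra).
assert (HAd : A < d1). { unfold A. rewrite pp3_eq. apply HX1; auto. }
assert (Hep1 : ep <= 1).
{ apply Rle_trans with ((4 + K) * d1). nra.
  apply Rle_trans with ((4 + K) * / (4 + K)). apply Rmult_le_compat_l; lra. right; field; lra. }
assert (Hep2 : 2 * ep < eps / 2).
{ apply Rle_lt_trans with (2 * ((4 + K) * A)). lra.
  apply Rlt_le_trans with (2 * ((4 + K) * d1)). nra.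
  apply Rle_trans with (2 * ((4 + K) * (eps / (4 * (4 + K))))). nra. right; field; lra. }
assert (Hr : E / (A * A) < eps / (2 * M')). { unfold E, A. rewrite ratio_eq. apply HX2; auto. }
assert (Hr2 : M' * (E / (A * A)) < eps / 2).
{ apply Rlt_le_trans with (M' * (eps / (2 * M'))). apply Rmult_lt_compat_l; auto. right; field; lra. }
destruct (Gamma_gamma ep (conj Hep0 Hep1)) as [G1 G2].
assert (P1 : Rpower 3 x = / A). { unfold A, pp. rewrite Rinv_inv. auto. }
assert (P2 : Rpower (9 / 5) x = B / (A * A)).
{ rewrite Rpower_div by lra. rewrite <- H9. unfold B, pp. field. split; apply Rgt_not_eq, Rpower_pos. }
assert (P3 : Rpower (9 / 7) x = C / (A * A)).
{ rewrite Rpower_div by lra. rewrite <- H9. unfold C, pp. field. split; apply Rgt_not_eq, Rpower_pos. }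
assert (P4 : Rpower (27 / 25) x = B * B / (A * A * A)).
{ rewrite Rpower_div by lra. unfold A, B. rewrite !Hmul by lra. unfold pp.
  replace (3 * 3 * 3) with 27 by ring. replace (5 * 5) with 25 by ring. field.
  split; apply Rgt_not_eq, Rpower_pos. }
rewrite Hep, P1, P2, P3, P4.
fold ep in Key.
replace (Gamma ep - / A + B / (A * A) + C / (A * A) - B * B / (A * A * A) + 1 - - euler_gamma)
  with ((Gamma ep - / ep + euler_gamma) + (/ ep - (/ A - B / (A * A) - C / (A * A) + B * B / (A * A * A) - 1))) by ring.
eapply Rle_lt_trans. apply Rabs_triang.
rewrite Rabs_pos_eq by lra. fold M' in Key. lra.
Qed.
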